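(* For every odd integer $g\geqslant1$, $J_g^-=J_{g-1}^-$.
   Context: $\zeta_k^-\in\mathbb{C}[\alpha,\gamma]$: $\zeta^-_i=0$ for $i<0$, $\zeta^-_0=1$, $\zeta^-_{k+1}=\alpha\zeta^-_k-16k^2\zeta^-_{k-1}+2k(k-1)\gamma\zeta^-_{k-2}$ for $k$ odd and $\zeta^-_{k+1}=\alpha\zeta^-_k+2k(k-1)\gamma\zeta^-_{k-2}$ for $k$ even ($k\geqslant0$); $J^-_k$ is the ideal $(\zeta^-_k,\zeta^-_{k+1},\zeta^-_{k+2})$ of $\mathbb{C}[\alpha,\gamma]$. *)

(* Defs.v *)
From mathcomp Require Import all_boot all_algebra.
From mathcomp Require Import complex Rstruct.
Set Implicit Arguments. Unset Strict Implicit. Unset Printing Implicit Defensive.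
Import GRing.Theory.
Local Open Scope ring_scope.

Definition CC : Type := Rdefinitions.R[i].
Definition CAG : Type := {poly {poly CC}}.
Definition alpha : CAG := 'X.
Definition gamma : CAG := ('X)%:P.

(* zeta3 k = (zeta^-_k, zeta^-_{k-1}, zeta^-_{k-2}), with zeta^-_i = 0 for i < 0. *)
Fixpoint zeta3 (k : nat) : CAG * CAG * CAG :=
  match k with
  | O => (1, 0, 0)
  | S k' =>
      let '(z0, z1, z2) := zeta3 k' in
      let znew :=
        if odd k' then
          alpha * z0 - (16 * (k' ^ 2)%N)%:R * z1 + (2 * k' * (k'.-1))%N%:R * gamma * z2
        else
          alpha * z0 + (2 * k' * (k'.-1))%N%:R * gamma * z2 in
      (znew, z0, z1)
  end.

Definition zeta_minus (k : nat) : CAG := (zeta3 k).1.1.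

Definition in_J_minus (k : nat) (p : CAG) : Prop :=
  exists a b c : CAG,
    p = a * zeta_minus k + b * zeta_minus k.+1 + c * zeta_minus k.+2.

(* Main.v *)
From HB Require Import structures.
Require Import Defs.
From mathcomp Require Import all_boot all_algebra.
From mathcomp Require Import complex Rstruct.
From mathcomp Require Import ring zify.
Set Implicit Arguments. Unset Strict Implicit. Unset Printing Implicit Defensive.
Import GRing.Theory Num.Theory.
Local Open Scope ring_scope.

HB.instance Definition _ := GRing.ComNzRing.on CAG.

Notation Z := zeta_minus.
Notation J := in_J_minus.

Lemma natC (n : nat) : (n%:R : CAG) = ((n%:R : CC)%:P)%:P.
Proof. by rewrite !rmorph_nat. Qed.
Lemma natC_neq0 (n : nat) : (0 < n)%N -> (n%:R : CC) != 0.
Proof. by move=> h; rewrite pnatr_eq0 -lt0n. Qed.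

Lemma Jeq k x y : x = y -> J k x -> J k y.
Proof. by move=> ->. Qed.
Lemma J0 k : J k 0.
Proof. by exists 0, 0, 0; ring. Qed.
Lemma JD k x y : J k x -> J k y -> J k (x + y).
Proof.
case=> a [b [c ->]] [a' [b' [c' ->]]].
by exists (a + a'), (b + b'), (c + c'); ring.
Qed.
Lemma JM k r x : J k x -> J k (r * x).
Proof. by case=> a [b [c ->]]; exists (r * a), (r * b), (r * c); ring. Qed.
Lemma JN k x : J k x -> J k (- x).
Proof. by move=> h; rewrite -mulN1r; apply: JM. Qed.
Lemma JB k x y : J k x -> J k y -> J k (x - y).
Proof. by move=> hx hy; apply: JD => //; apply: JN. Qed.
Lemma Jg0 k : J k (Z k).
Proof. by exists 1, 0, 0; ring. Qed.
Lemma Jg1 k : J k (Z k.+1).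
Proof. by exists 0, 1, 0; ring. Qed.
Lemma Jg2 k : J k (Z k.+2).
Proof. by exists 0, 0, 1; ring. Qed.
Lemma Jdiv k n x : (0 < n)%N -> J k (n%:R * x) -> J k x.
Proof.
move=> hn h; have -> : x = ((n%:R : CC)^-1)%:P%:P * (n%:R * x).
  by rewrite natC mulrA -polyCM -polyCM mulVf ?natC_neq0 // !polyC1 mul1r.
by apply: JM.
Qed.

Definition step (k' : nat) (t : CAG * CAG * CAG) : CAG * CAG * CAG :=
      let '(z0, z1, z2) := t in
      let znew :=
        if odd k' then
          alpha * z0 - (16 * (k' ^ 2)%N)%:R * z1 + (2 * k' * (k'.-1))%N%:R * gamma * z2
        else
          alpha * z0 + (2 * k' * (k'.-1))%N%:R * gamma * z2 in
      (znew, z0, z1).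

Lemma zeta3_unfold k : zeta3 k.+1 = step k (zeta3 k).
Proof. by []. Qed.

Lemma zeta3_S k : (zeta3 k.+1).1.2 = Z k /\ (zeta3 k.+1).2 = (zeta3 k).1.2.
Proof. rewrite zeta3_unfold /zeta_minus /step. by case: (zeta3 k) => [[a b] c]. Qed.

Lemma zeta3E k : zeta3 k.+2 = (Z k.+2, Z k.+1, Z k).
Proof.
case: (zeta3_S k.+1) => h1 h2; case: (zeta3_S k) => h3 _.
by rewrite [zeta3 k.+2]surjective_pairing [(zeta3 k.+2).1]surjective_pairing h1 h2 h3.
Qed.

Lemma Ev k : Z (2 * k).+3 = alpha * Z (2 * k).+2
   + (2 * (2 * k).+2 * (2 * k).+1)%:R * gamma * Z (2 * k).
Proof.
have ho : odd (2 * k).+2 = false by rewrite /= negbK oddM.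
by rewrite /zeta_minus zeta3_unfold zeta3E /step ho.
Qed.

Lemma Od k : Z (2 * k).+4 = alpha * Z (2 * k).+3 - (16 * (2 * k).+3 ^ 2)%:R * Z (2 * k).+2
   + (2 * (2 * k).+3 * (2 * k).+2)%:R * gamma * Z (2 * k).+1.
Proof.
have ho : odd (2 * k).+3 = true by rewrite /= negbK oddM.
by rewrite /zeta_minus zeta3_unfold zeta3E /step ho.
Qed.

Lemma Z0 : Z 0 = 1. Proof. by []. Qed.
Lemma Z1 : Z 1 = alpha. Proof. rewrite /zeta_minus /=; ring. Qed.
Lemma Z2 : Z 2 = alpha ^+ 2 - 16%:R. Proof. rewrite /zeta_minus /=; ring. Qed.

Lemma dbl k : (2 * k.+1 = (2 * k).+2)%N. Proof. by rewrite mulnS. Qed.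

Lemma down_ind (P : nat -> Prop) m : P m ->
  (forall i, (i < m)%N -> P i.+1 -> P i) -> forall i, (i <= m)%N -> P i.
Proof.
move=> Pm IH.
suff H : forall d i, (i <= m)%N -> (m - i)%N = d -> P i.
  by move=> i hi; apply: (H (m - i)%N).
elim=> [|d IHd] i hi hd.
  by have -> : i = m by lia.
apply: IH; first by lia.
apply: IHd; lia.
Qed.

Definition Sig i := (4 * (2 * i).+1)%:R * Z (2 * i) + Z (2 * i).+1.
Definition Del i := (4 * (2 * i).+1)%:R * Z (2 * i) - Z (2 * i).+1.

Lemma SigId i : ((4 * (2 * i).+3)%:R - alpha) * Sig i.+1 + Z (2 * i).+4
  = (4 * i.+1 * (2 * i).+3)%:R * gamma * Sig i.
Proof. rewrite /Sig dbl Od Ev; ring. Qed.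
Lemma DelId i : ((4 * (2 * i).+3)%:R + alpha) * Del i.+1 + Z (2 * i).+4
  = - ((4 * i.+1 * (2 * i).+3)%:R * gamma * Del i).
Proof. rewrite /Del dbl Od Ev; ring. Qed.
Lemma Sig0 : ((4 * (2 * 0).+1)%:R - alpha) * Sig 0 + Z (2 * 0).+2 = 0.
Proof. rewrite /Sig muln0 Z0 Z1 Z2; ring. Qed.
Lemma Del0 : ((4 * (2 * 0).+1)%:R + alpha) * Del 0 + Z (2 * 0).+2 = 0.
Proof. rewrite /Del muln0 Z0 Z1 Z2; ring. Qed.

Fixpoint PiM n : CAG := if n is n'.+1 then PiM n' * ((4 * (2 * n').+1)%:R - alpha) else 1.
Fixpoint PiP n : CAG := if n is n'.+1 then PiP n' * ((4 * (2 * n').+1)%:R + alpha) else 1.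
Fixpoint NP c n : nat := if n is n'.+1 then (NP c n' * (4 * (2 * n').+1 + c))%N else 1%N.

Lemma NP_gt0 c n : (0 < NP c n)%N.
Proof. by elim: n => //= n IH; rewrite muln_gt0 IH. Qed.

Lemma evalP k y c : J k (alpha * y - c%:R * y) ->
  forall n, J k (PiP n * y - (NP c n)%:R * y).
Proof.
move=> h; elim=> [|n IH].
  by apply: (@Jeq _ 0); [rewrite /=; ring | apply: J0].
apply: (@Jeq _ (((4 * (2 * n).+1)%:R + alpha) * (PiP n * y - (NP c n)%:R * y)
    + (NP c n)%:R * (alpha * y - c%:R * y))); first by rewrite /=; ring.
by apply: JD; apply: JM.
Qed.

Section Main.
Variable m : nat.

Lemma gJ x : J (2 * m) x -> J (2 * m).+1 (gamma * x).
Proof.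
case=> a [b [c ->]].
have hg : J (2 * m).+1 (gamma * Z (2 * m)).
  apply: (@Jdiv _ (2 * (2 * m).+2 * (2 * m).+1)); first by rewrite !muln_gt0.
  apply: (@Jeq _ (Z (2 * m).+3 - alpha * Z (2 * m).+2)); first by rewrite Ev; ring.
  by apply: JB; [apply: Jg2 | apply: JM; apply: Jg1].
apply: (@Jeq _ (a * (gamma * Z (2 * m)) + (b * gamma) * Z (2 * m).+1 + (c * gamma) * Z (2 * m).+2)).
  by ring.
apply: JD; [apply: JD|]; apply: JM => //; [apply: Jg0 | apply: Jg1].
Qed.

Definition P4 i := J (2 * m) (gamma ^+ (m - i) * Z (2 * i))
  /\ J (2 * m) (gamma ^+ (m - i) * Z (2 * i).+1)
  /\ J (2 * m) (gamma ^+ (m - i) * Z (2 * i).+2).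

Lemma L4 i : (i <= m)%N -> P4 i.
Proof.
apply: down_ind.
  by rewrite /P4 subnn expr0 !mul1r; split; [apply: Jg0 | split; [apply: Jg1 | apply: Jg2]].
move=> {}i hi [h0 [h1 h2]].
rewrite dbl in h0 h1 h2.
have he : (m - i = (m - i.+1).+1)%N by lia.
rewrite /P4 he; set e := (m - i.+1)%N; rewrite -/e in h0 h1 h2.
split; last split.
- apply: (@Jdiv _ (2 * (2 * i).+2 * (2 * i).+1)); first by rewrite !muln_gt0.
  apply: (@Jeq _ (gamma ^+ e * Z (2 * i).+3 - alpha * (gamma ^+ e * Z (2 * i).+2))).
    by rewrite Ev exprSr; ring.
  by apply: JB => //; apply: JM.
- apply: (@Jdiv _ (2 * (2 * i).+3 * (2 * i).+2)); first by rewrite !muln_gt0.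
  apply: (@Jeq _ (gamma ^+ e * Z (2 * i).+4 - alpha * (gamma ^+ e * Z (2 * i).+3)
            + (16 * (2 * i).+3 ^ 2)%:R * (gamma ^+ e * Z (2 * i).+2))).
    by rewrite Od exprSr; ring.
  by apply: JD; [apply: JB => //; apply: JM | apply: JM].
- apply: (@Jeq _ (gamma * (gamma ^+ e * Z (2 * i).+2))); first by rewrite exprS; ring.
  by apply: JM.
Qed.

Lemma L5 i : (i <= m)%N -> J (2 * m).+1 (gamma ^+ (m - i) * Z (2 * i).+2).
Proof.
move=> hi; case: (ltnP i m) => him.
  have he : (m - i = (m - i.+1).+1)%N by lia.
  have [h0 _] := L4 him; rewrite dbl in h0.
  rewrite he exprS -mulrA; exact: gJ.
have -> : i = m by lia.
by rewrite subnn expr0 mul1r; apply: Jg1.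
Qed.

Lemma L7 i : (i <= m)%N -> J (2 * m).+1 (PiM i.+1 * (gamma ^+ (m - i) * Sig i)).
Proof.
elim: i => [|i IH] hi.
  apply: (@Jeq _ (- (gamma ^+ (m - 0) * Z (2 * 0).+2))).
    have := Sig0 => E.
    have E' : Z (2 * 0).+2 = - (((4 * (2 * 0).+1)%:R - alpha) * Sig 0).
      transitivity ((((4 * (2 * 0).+1)%:R - alpha) * Sig 0 + Z (2 * 0).+2) - ((4 * (2 * 0).+1)%:R - alpha) * Sig 0); first ring.
      by rewrite E sub0r.
    by rewrite E' /=; ring.
  by apply: JN; apply: L5.
have he : (m - i = (m - i.+1).+1)%N by lia.
have IH' := IH (ltnW hi); rewrite he in IH'.
have h5 := L5 hi; rewrite dbl in h5.
set e := (m - i.+1)%N in IH' h5 *.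
apply: (@Jeq _ ((4 * i.+1 * (2 * i).+3)%:R * (PiM i.+1 * (gamma ^+ e.+1 * Sig i))
   - PiM i.+1 * (gamma ^+ e * Z (2 * i).+4))).
  have E := SigId i.
  have E' : Z (2 * i).+4 = (4 * i.+1 * (2 * i).+3)%:R * gamma * Sig i
      - ((4 * (2 * i).+3)%:R - alpha) * Sig i.+1 by rewrite -E; ring.
  by rewrite E' /= exprS; ring.
by apply: JB => //; apply: JM.
Qed.

Lemma L7' i : (i <= m)%N -> J (2 * m).+1 (PiP i.+1 * (gamma ^+ (m - i) * Del i)).
Proof.
elim: i => [|i IH] hi.
  apply: (@Jeq _ (- (gamma ^+ (m - 0) * Z (2 * 0).+2))).
    have := Del0 => E.
    have E' : Z (2 * 0).+2 = - (((4 * (2 * 0).+1)%:R + alpha) * Del 0).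
      transitivity ((((4 * (2 * 0).+1)%:R + alpha) * Del 0 + Z (2 * 0).+2) - ((4 * (2 * 0).+1)%:R + alpha) * Del 0); first ring.
      by rewrite E sub0r.
    by rewrite E' /=; ring.
  by apply: JN; apply: L5.
have he : (m - i = (m - i.+1).+1)%N by lia.
have IH' := IH (ltnW hi); rewrite he in IH'.
have h5 := L5 hi; rewrite dbl in h5.
set e := (m - i.+1)%N in IH' h5 *.
apply: (@Jeq _ (- ((4 * i.+1 * (2 * i).+3)%:R * (PiP i.+1 * (gamma ^+ e.+1 * Del i)))
   - PiP i.+1 * (gamma ^+ e * Z (2 * i).+4))).
  have E := DelId i.
  have E' : Z (2 * i).+4 = - ((4 * i.+1 * (2 * i).+3)%:R * gamma * Del i)
      - ((4 * (2 * i).+3)%:R + alpha) * Del i.+1 by rewrite -E; ring.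
  by rewrite E' /= exprS; ring.
by apply: JB; [apply: JN; apply: JM | apply: JM].
Qed.

Lemma L8 : J (2 * m).+1 (PiM m.+1 * Z (2 * m)).
Proof.
apply: (@Jdiv _ (4 * (2 * m).+1)) => //.
have h := L7 (leqnn m); rewrite subnn expr0 mul1r in h.
apply: (@Jeq _ (PiM m.+1 * Sig m - PiM m.+1 * Z (2 * m).+1)); first by rewrite /Sig; ring.
by apply: JB => //; apply: JM; apply: Jg0.
Qed.

Lemma L8' : J (2 * m).+1 (PiP m.+1 * Z (2 * m)).
Proof.
apply: (@Jdiv _ (4 * (2 * m).+1)) => //.
have h := L7' (leqnn m); rewrite subnn expr0 mul1r in h.
apply: (@Jeq _ (PiP m.+1 * Del m + PiP m.+1 * Z (2 * m).+1)); first by rewrite /Del; ring.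
by apply: JD => //; apply: JM; apply: Jg0.
Qed.

Lemma L10 : J (2 * m).+1 (Z (2 * m)).
Proof.
suff H : forall k, (k <= m.+1)%N -> J (2 * m).+1 (PiM k * Z (2 * m)).
  by apply: (@Jeq _ (PiM 0 * Z (2 * m))); [rewrite /= mul1r | apply: H].
apply: down_ind; first exact: L8.
move=> k hk h.
set y := PiM k * Z (2 * m).
set c := (4 * (2 * k).+1)%N.
have hy : J (2 * m).+1 (alpha * y - c%:R * y).
  apply: (@Jeq _ (- (PiM k.+1 * Z (2 * m)))); first by rewrite /= /y /c; ring.
  by apply: JN.
have := evalP hy m.+1 => h2.
apply: (@Jdiv _ (NP c m.+1)); first exact: NP_gt0.
apply: (@Jeq _ (PiM k * (PiP m.+1 * Z (2 * m)) - (PiP m.+1 * y - (NP c m.+1)%:R * y))).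
  by rewrite /y; ring.
by apply: JB => //; apply: JM; apply: L8'.
Qed.

End Main.

Local Close Scope ring_scope.

Theorem corollary5p5 (g : nat) :
  odd g -> (1 <= g)%N ->
  forall p : CAG, in_J_minus g p <-> in_J_minus (g - 1) p.
Proof.
move=> hodd _ p.
have hg : g = (2 * g./2).+1.
  by rewrite -{1}(odd_double_half g) hodd mul2n add1n.
move: (g./2) hg => m ->; rewrite subn1 /=.
split.
- case=> a [b [c ->]].
  apply: JD; [apply: JD|]; apply: JM; [apply: Jg1 | apply: Jg2 |].
  rewrite Ev; apply: JD; apply: JM; [apply: Jg2 | apply: Jg0].
- case=> a [b [c ->]].
  apply: JD; [apply: JD|]; apply: JM; [apply: L10 | apply: Jg0 | apply: Jg1].
Qed.
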